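(* Let $p$ be a prime and let $R$ be the ring whose additive group is $\mathbb{Z}_{p^2}\oplus\mathbb{Z}_p\oplus\mathbb{Z}_p$ with basis $\{1,t,y\}$ (elements $r+st+hy$ with $r\in\mathbb{Z}_{p^2}$, $s,h\in\mathbb{Z}_p$), $1$ the identity, and multiplication determined by $t^2=0$, $y^2=y$, $ty=0$, $yt=t$. Then the pair $(1-t-y,\,t)\in R^2$ is not unimodular, the cyclic submodule $R(1-t-y,t)$ is free, and $(1-t-y,t)$ is an outlier.
   Context: $R^2$ is the free left $R$-module of pairs; $R(a,b)=\{(\alpha a,\alpha b):\alpha\in R\}$ is free if $r(a,b)=(0,0)$ implies $r=0$. A pair $(a,b)$ is (right) unimodular if there exist $x,y\in R$ with $ax+by=1$; it is an outlier if there are no $r\in R$ and unimodular $(x,y)\in R^2$ with $(a,b)=r(x,y)$. *)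

(* Defs.v *)
From HB Require Import structures.
From mathcomp Require Import all_boot all_order all_algebra.
Set Implicit Arguments. Unset Strict Implicit. Unset Printing Implicit Defensive.
Import GRing.Theory.
Local Open Scope ring_scope.

(* The ring R = Z_{p^2} + Z_p t + Z_p y, an element r + s t + h y being
   represented by the triple (r, s, h). *)
Definition Rp (p : nat) : Type := ('Z_(p ^ 2) * 'Z_p * 'Z_p)%type.

Section Ring.
Variable p : nat.

(* reduction Z_{p^2} -> Z_p (coefficients of t and y live in Z_p) *)
Definition red (r : 'Z_(p ^ 2)) : 'Z_p := inZp (nat_of_ord r).

Definition Rmk (r : 'Z_(p ^ 2)) (s h : 'Z_p) : Rp p := (r, s, h).
Definition rc (x : Rp p) : 'Z_(p ^ 2) := x.1.1.
Definition sc (x : Rp p) : 'Z_p := x.1.2.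
Definition hc (x : Rp p) : 'Z_p := x.2.

Definition R0 : Rp p := Rmk 0 0 0.
Definition R1 : Rp p := Rmk 1 0 0.
Definition Rt : Rp p := Rmk 0 1 0.
Definition Ry : Rp p := Rmk 0 0 1.

Definition Radd (a b : Rp p) : Rp p :=
  Rmk (rc a + rc b) (sc a + sc b) (hc a + hc b).
Definition Ropp (a : Rp p) : Rp p := Rmk (- rc a) (- sc a) (- hc a).
Definition Rsub (a b : Rp p) : Rp p := Radd a (Ropp b).

(* (r1 + s1 t + h1 y)(r2 + s2 t + h2 y), using t^2 = 0, y^2 = y, ty = 0, yt = t:
   = r1 r2 + (r1 s2 + s1 r2 + h1 s2) t + (r1 h2 + h1 r2 + h1 h2) y *)
Definition Rmul (a b : Rp p) : Rp p :=
  Rmk (rc a * rc b)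
      (red (rc a) * sc b + sc a * red (rc b) + hc a * sc b)
      (red (rc a) * hc b + hc a * red (rc b) + hc a * hc b).

Definition unimodular (a b : Rp p) : Prop :=
  exists x y : Rp p, Radd (Rmul a x) (Rmul b y) = R1.

(* R(a,b) is a free left R-module: r(a,b) = (0,0) implies r = 0 *)
Definition cyclic_free (a b : Rp p) : Prop :=
  forall r : Rp p, Rmul r a = R0 -> Rmul r b = R0 -> r = R0.

Definition outlier (a b : Rp p) : Prop :=
  ~ exists r x y : Rp p, unimodular x y /\ a = Rmul r x /\ b = Rmul r y.

End Ring.

(* Main.v *)
Require Import Defs.
From mathcomp Require Import all_boot all_order all_algebra.
From mathcomp Require Import ring.
Import GRing.Theory.
Local Open Scope ring_scope.

Section H.
Variable p : nat.
Hypothesis p1 : (1 < p)%N.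

Lemma p21 : (1 < p ^ 2)%N.
Proof. rewrite expnS expn1; apply: (leq_trans p1); by rewrite leq_pmulr // ltnW. Qed.

Lemma red_mul (a b : 'Z_(p ^ 2)) : red (a * b) = red a * red b.
Proof.
apply: val_inj; rewrite /red /=.
suff H : forall m k : nat, ((m * k) %% (Zp_trunc (p ^ 2)).+2
   = m %% (Zp_trunc p).+2 * (k %% (Zp_trunc p).+2) %[mod (Zp_trunc p).+2])%N.
  exact: H.
move=> m k; rewrite (Zp_cast p1) (Zp_cast p21).
rewrite modn_dvdm; last by rewrite expnS expn1 dvdn_mulr.
by rewrite modnMm.
Qed.

Lemma red1 : red (1 : 'Z_(p ^ 2)) = 1.
Proof. by apply: val_inj; rewrite /red /= (@modn_small 1). Qed.

Lemma red0 : red (0 : 'Z_(p ^ 2)) = 0.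
Proof. by apply: val_inj; rewrite /red /= mod0n. Qed.
End H.

Lemma aE p : Rsub (Rsub (R1 p) (Rt p)) (Ry p) = Rmk 1 (-1) (-1).
Proof.
rewrite /Rsub /Radd /Ropp /R1 /Rt /Ry /Rmk /rc /sc /hc; cbn [fst snd].
by rewrite !oppr0 !addr0 !add0r.
Qed.

Lemma tripE p (r r' : 'Z_(p ^ 2)) (s s' h h' : 'Z_p) :
  (r, s, h) = (r', s', h') -> [/\ r = r', s = s' & h = h'].
Proof.
move=> E; split; [exact: (congr1 (fun x => x.1.1) E) |
  exact: (congr1 (fun x => x.1.2) E) | exact: (congr1 (fun x => x.2) E)].
Qed.

Ltac unf := rewrite /unimodular /cyclic_free /outlier /Radd /Rmul /R1 /R0 /Rt /Ry /Rmk /rc /sc /hc; cbn [fst snd].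

Theorem mainTheorem15 (p : nat) (hp : prime p) :
  let a := Rsub (Rsub (R1 p) (Rt p)) (Ry p) in
  let b := Rt p in
  ~ unimodular a b /\ cyclic_free a b /\ outlier a b.
Proof.
have p1 := prime_gt1 hp.
move=> a b; rewrite {}/a {}/b aE.
split; [|split].
- unf. move=> [[[rx sx] hx] [[[ry sy] hy] E]]; cbn [fst snd] in E.
  case/tripE: E => Er Es Eh.
  rewrite mul1r mul0r addr0 in Er; subst rx.
  rewrite red1 // red0 in Eh.
  have : - (1 : 'Z_p) = 0 by rewrite -[RHS]Eh; ring.
  by move/eqP; rewrite oppr_eq0 oner_eq0.
- unf. move=> [[r s] h] Ea Eb; cbn [fst snd] in Ea; cbn [fst snd] in Eb.
  case/tripE: Ea => Ar As Ah; case/tripE: Eb => Br Bs Bh.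
  rewrite mulr1 in Ar; subst r.
  rewrite red0 in As Bs; rewrite red1 // in As.
  have h0 : h = 0 by rewrite -[RHS]Bs; ring.
  subst h.
  have s0 : s = 0 by rewrite -[RHS]As; ring.
  by subst s.
- unf. move=> [[[rr sr] hr] [[[rx sx] hx] [[[ry sy] hy] [U [Ea Eb]]]]].
  move: U; unf. move=> [[[rx' sx'] hx'] [[[ry' sy'] hy'] E]]; cbn [fst snd] in E; cbn [fst snd] in Ea; cbn [fst snd] in Eb.
  case/tripE: Ea => Ar As Ah; case/tripE: Eb => Br Bs Bh.
  case/tripE: E => Er Es Eh.
  have ry0 : ry = 0.
    have -> : ry = rx * (rr * ry) by rewrite mulrA (mulrC rx) -Ar mul1r.
    by rewrite -Br mulr0.
  subst ry.
  rewrite red0 in Bs Bh Eh.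
  rewrite mul0r addr0 in Er.
  have uX1 : 1 = red rr * red rx by rewrite -red_mul // -Ar red1.
  have XX1 : red rx * red rx' = 1 by rewrite -red_mul // Er red1.
  have Bs' : (red rr + hr) * sy = 1 by rewrite Bs; ring.
  have hy0 : hy = 0.
    transitivity (hy * ((red rr + hr) * sy)); first by rewrite Bs' mulr1.
    transitivity ((red rr * hy + hr * 0 + hr * hy) * sy); first ring.
    by rewrite -Bh mul0r.
  subst hy.
  have uH : red rr * hx = -1.
    transitivity (red rr * hx * ((red rr + hr) * sy)); first by rewrite Bs' mulr1.
    transitivity (sy * (red rr * (red rr * hx + hr * red rx + hr * hx)
       - hr * (red rr * red rx))); first ring.
    rewrite -Ah -uX1.
    transitivity (- ((red rr + hr) * sy)); first ring.
    by rewrite Bs'.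
  have X0 : red rx' = 0.
    transitivity (- ((red rr * red rx) * hx' + (red rr * hx) * red rx'
                    + (red rr * hx) * hx')).
      by rewrite -uX1 uH; ring.
    transitivity (- (red rr * (red rx * hx' + hx * red rx' + hx * hx' +
      (0 * hy' + 0 * red ry' + 0 * hy')))); first ring.
    by rewrite Eh mulr0 oppr0.
  have : (1 : 'Z_p) = 0 by rewrite -XX1 X0 mulr0.
  by move/eqP; rewrite oner_eq0.
Qed.
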